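(* Let $\gamma>0$ and let $\mathcal M\subset\mathbb{R}^3$ be a finite set of models. The following are equivalent: (i) There exists a causal output-feedback control policy $\mu^\star$ such that the closed-loop system (defined in the context) is finite gain. (ii) For each $M=(a,b,c)\in\mathcal M$ the Riccati equation $P_M=\left(\frac{a^2}{P_M+\gamma^2c^2-1}+\gamma^{-2}\right)^{-1}$ has a positive solution $P_M$ (so that the observers $(\hat x_M,l_M)$ below are defined), and there exists an observer-based control policy $\eta^\star$, \[ u(t)=\eta^\star\left\{\left(\hat x_M(t),l_M(t+1),y(t)\right):M\in\mathcal M\right\}, \] such that $l_M(t+1)\le 0$ for all $M\in\mathcal M$, all $y\in\ell_2[0,t]$ and all $t\ge 0$. Moreover, if $\eta^\star$ satisfies (ii), then the policy \[ \mu^\star_t(y(0),\dots,y(t))=\eta^\star\left\{\left(\hat x_M(t),l_M(t+1),y(t)\right):M\in\mathcal M\right\} \] satisfies (i).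
   Context: For a model $M=(a,b,c)\in\mathcal M$ the uncertain system is $x(t+1)=ax(t)+bu(t)+w(t)$, $x(0)=x_0$, $y(t)=cx(t)+v(t)$, $t\ge 0$, with real-valued signals and $w,v\in\ell_2[0,T]$ for all $T$; the model $M$ is unknown but belongs to $\mathcal M$. A causal output-feedback policy generates $u(t)=\mu_t(y(0),\dots,y(t))$. With $P_M$ a positive solution of the Riccati equation above, the closed loop is finite gain if for all $T\ge 0$, all $w,v$, all $x_0\in\mathbb{R}$ and every $M\in\mathcal M$, \[ \sum_{\tau=0}^{T+1}x(\tau)^2-\gamma^2\sum_{\tau=0}^{T}w(\tau)^2-\gamma^2\sum_{\tau=0}^{T+1}v(\tau)^2-P_Mx(0)^2\le 0. \] Observers: with $\hat a_M=\frac{aP_M}{P_M+\gamma^2c^2-1}$ and $\hat g_M=\gamma^2\frac{ac}{P_M+\gamma^2c^2-1}$, define recursively from the measurements $y$ and applied inputs $u$: $\hat x_M(t+1)=\hat a_M\hat x_M(t)+bu(t)+\hat g_My(t)$, $\hat x_M(0)=0$, and $l_M(t+1)=l_M(t)-P_M\hat x_M(t)^2-\gamma^2y(t)^2+\frac{(P_M\hat x_M(t)+\gamma^2cy(t))^2}{P_M+\gamma^2c^2-1}$, $l_M(0)=0$.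
   Formalization: Each positive solution $P_M$ of the Riccati equation also satisfies $P_M+\gamma^2c^2-1>0$, with one such family $P_M$ shared by the finite-gain condition in (i), the observers in (ii) and the final assertion. Each condition added here is assumed in the paper as well or is needed for the statement above to hold. *)

(* Defs.v *)
From mathcomp Require Import all_boot all_order all_algebra.
From mathcomp Require Import reals.

Set Implicit Arguments.
Unset Strict Implicit.
Unset Printing Implicit Defensive.

Import Order.TTheory GRing.Theory Num.Theory.
Local Open Scope ring_scope.

Section Defs.
Variable R : realType.

Definition model := (R * R * R)%type.
Definition ma (M : model) : R := M.1.1.
Definition mb (M : model) : R := M.1.2.
Definition mc (M : model) : R := M.2.

Definition rden (gamma : R) (M : model) (p : R) : R :=
  p + gamma ^+ 2 * mc M ^+ 2 - 1.

Definition riccati_sol (gamma : R) (M : model) (p : R) : Prop :=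
  0 < p /\ 0 < rden gamma M p /\
  p = (ma M ^+ 2 / rden gamma M p + gamma ^- 2)^-1.

Definition riccati_sols (gamma : R) (Ms : seq model) (P : model -> R) : Prop :=
  forall M, M \in Ms -> riccati_sol gamma M (P M).

(* A causal policy: u(t) = mu t [:: y(0); ...; y(t)]. *)
Definition policy := nat -> seq R -> R.

Definition closed_loop (M : model) (x0 : R) (w v : nat -> R) (mu : policy)
    (x u y : nat -> R) : Prop :=
  [/\ x 0%N = x0,
      (forall t, x t.+1 = ma M * x t + mb M * u t + w t),
      (forall t, y t = mc M * x t + v t) &
      (forall t, u t = mu t (mkseq y t.+1))].

Definition finite_gain (gamma : R) (Ms : seq model) (P : model -> R)
    (mu : policy) : Prop :=
  forall (M : model), M \in Ms ->
  forall (x0 : R) (w v x u y : nat -> R), closed_loop M x0 w v mu x u y ->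
  forall T : nat,
    \sum_(0 <= tau < T.+2) x tau ^+ 2
    - gamma ^+ 2 * \sum_(0 <= tau < T.+1) w tau ^+ 2
    - gamma ^+ 2 * \sum_(0 <= tau < T.+2) v tau ^+ 2
    - P M * x0 ^+ 2 <= 0.

Definition ahat (gamma : R) (M : model) (p : R) : R :=
  ma M * p / rden gamma M p.
Definition ghat (gamma : R) (M : model) (p : R) : R :=
  gamma ^+ 2 * (ma M * mc M / rden gamma M p).

Definition lstep (gamma : R) (M : model) (p xh l yt : R) : R :=
  l - p * xh ^+ 2 - gamma ^+ 2 * yt ^+ 2
  + (p * xh + gamma ^+ 2 * mc M * yt) ^+ 2 / rden gamma M p.

(* An observer-based policy eta receives the family
   {(xhat_M(t), l_M(t+1), y(t)) : M in Ms}, listed in the order of Ms. *)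
Definition obs_policy := seq (R * R * R) -> R.

Fixpoint obs (gamma : R) (Ms : seq model) (P : model -> R) (eta : obs_policy)
    (y : nat -> R) (t : nat) : (model -> R) * (model -> R) :=
  match t with
  | 0%N => (fun _ => 0, fun _ => 0)
  | s.+1 =>
      let st := obs gamma Ms P eta y s in
      let xh := st.1 in
      let l := st.2 in
      let l' := fun M => lstep gamma M (P M) (xh M) (l M) (y s) in
      let u := eta [seq (xh M, l' M, y s) | M <- Ms] in
      (fun M => ahat gamma M (P M) * xh M + mb M * u
                + ghat gamma M (P M) * y s, l')
  end.

Definition xhat gamma Ms P eta y t (M : model) : R :=
  (obs gamma Ms P eta y t).1 M.
Definition lobs gamma Ms P eta y t (M : model) : R :=
  (obs gamma Ms P eta y t).2 M.

Definition uobs gamma Ms P (eta : obs_policy) (y : nat -> R) (t : nat) : R :=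
  eta [seq (xhat gamma Ms P eta y t M, lobs gamma Ms P eta y t.+1 M, y t)
      | M <- Ms].

Definition observer_safe (gamma : R) (Ms : seq model) (P : model -> R)
    (eta : obs_policy) : Prop :=
  forall (y : nat -> R) (t : nat) (M : model), M \in Ms ->
    lobs gamma Ms P eta y t.+1 M <= 0.

Definition mu_of_eta gamma Ms P (eta : obs_policy) : policy :=
  fun t ys => uobs gamma Ms P eta (fun s => nth 0 ys s) t.

End Defs.

(* Main.v *)
Require Import Defs.
From mathcomp Require Import all_boot all_order all_algebra.
From mathcomp Require Import reals.
From mathcomp Require Import ring lra.
From Stdlib Require Import ClassicalEpsilon.
Import Order.TTheory GRing.Theory Num.Theory.
Local Open Scope ring_scope.
Set Implicit Arguments.
Unset Strict Implicit.

Section Alg.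
Variable R : realType.
Variables (g : R) (M : model R) (p : R).
Hypothesis hg : 0 < g.
Hypothesis hr : riccati_sol g M p.

Lemma hp0 : 0 < p. Proof. by case: hr. Qed.
Lemma hD0 : 0 < rden g M p. Proof. by case: hr => _ []. Qed.

Lemma algA l xh x yy :
  l - p * (x - xh) ^+ 2 + x ^+ 2 - g ^+ 2 * (yy - mc M * x) ^+ 2 =
  lstep g M p xh l yy
  - rden g M p * (x - (p * xh + g ^+ 2 * mc M * yy) / rden g M p) ^+ 2.
Proof.
have hD : rden g M p != 0 by rewrite gt_eqF // hD0.
move: hD; rewrite /lstep /rden; move: (mc M) => c hD; field; by rewrite exprMn.
Qed.

Lemma pk : p * (ma M ^+ 2 / rden g M p + g ^- 2) = 1.
Proof.
case: hr => h0 [h1 h2].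
have hk : ma M ^+ 2 / rden g M p + g ^- 2 != 0.
  by apply: lt0r_neq0 ; rewrite ltr_wpDl // ?divr_ge0 ?sqr_ge0 ?ltW // invr_gt0 exprn_gt0.
by rewrite {1}h2 mulVf.
Qed.

Lemma algB z w :
  p * (ma M * z + w) ^+ 2 <= rden g M p * z ^+ 2 + g ^+ 2 * w ^+ 2.
Proof.
have hD := hD0; have hp := hp0.
have e : rden g M p * z ^+ 2 + g ^+ 2 * w ^+ 2 - p * (ma M * z + w) ^+ 2
   = p * ((ma M * g ^+ 2 * w - rden g M p * z) ^+ 2 / (rden g M p * g ^+ 2)).
  rewrite -[X in X - _ = _]mul1r -pk -mulrA -mulrBr; congr (_ * _).
  have : rden g M p != 0 by rewrite gt_eqF.
  have : g != 0 by rewrite gt_eqF.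
  move: (ma M) (rden g M p) => a d h1 h2; field; by rewrite ?h1 ?h2.
rewrite -subr_ge0 e; apply: mulr_ge0; first exact: ltW.
apply: divr_ge0; first exact: sqr_ge0.
by apply: mulr_ge0; [exact: ltW | exact: sqr_ge0].
Qed.

Lemma algC xh yy :
  ahat g M p * xh + ghat g M p * yy =
  ma M * ((p * xh + g ^+ 2 * mc M * yy) / rden g M p).
Proof.
have : rden g M p != 0 by rewrite gt_eqF // hD0.
rewrite /ahat /ghat; move: (ma M) (mc M) (rden g M p) => a c d h; field; by [].
Qed.

Fixpoint xg (u y : nat -> R) t : R :=
  if t is s.+1 then ahat g M p * xg u y s + mb M * u s + ghat g M p * y s else 0.
Fixpoint lg (u y : nat -> R) t : R :=
  if t is s.+1 then lstep g M p (xg u y s) (lg u y s) (y s) else 0.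
Definition xs (u y : nat -> R) t : R :=
  (p * xg u y t + g ^+ 2 * mc M * y t) / rden g M p.

Lemma xgS u y t : xg u y t.+1 = ma M * xs u y t + mb M * u t.
Proof. rewrite /= /xs -algC; ring. Qed.

Lemma dissip u y x w v :
  (forall t, x t.+1 = ma M * x t + mb M * u t + w t) ->
  (forall t, y t = mc M * x t + v t) ->
  forall t,
  \sum_(0 <= i < t.+1) x i ^+ 2 - g ^+ 2 * \sum_(0 <= i < t) w i ^+ 2
  - g ^+ 2 * \sum_(0 <= i < t.+1) v i ^+ 2 - p * x 0%N ^+ 2
  <= lg u y t.+1 - rden g M p * (x t - xs u y t) ^+ 2.
Proof.
move=> hx hy.
have hv : forall t, v t = y t - mc M * x t by move=> t; rewrite hy addrC addKr.
elim=> [|t IH].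
  rewrite !big_nat1 big_geq // hv mulr0 subr0.
  have := algA 0 0 (x 0%N) (y 0%N).
  rewrite /xs /= !mulr0 !add0r subr0 => <-.
  lra.
rewrite [\sum_(0 <= i < t.+2) x i ^+ 2]big_nat_recr // [\sum_(0 <= i < t.+1) w i ^+ 2]big_nat_recr //.
rewrite [\sum_(0 <= i < t.+2) v i ^+ 2]big_nat_recr //=.
have hA := algA (lg u y t.+1) (xg u y t.+1) (x t.+1) (y t.+1).
have hB := algB (x t - xs u y t) (w t).
have e : ma M * (x t - xs u y t) + w t = x t.+1 - xg u y t.+1.
  by rewrite hx xgS; ring.
rewrite e in hB.
rewrite -hv in hA.
rewrite /xs -/(xs u y t.+1) in hA.
move: IH hA hB.
set S1 := \sum_(0 <= i < t.+1) x i ^+ 2.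
set S2 := \sum_(0 <= i < t) w i ^+ 2.
set S3 := \sum_(0 <= i < t.+1) v i ^+ 2.
lra.
Qed.
End Alg.

Section Obs.
Variable R : realType.
Variables (g : R) (Ms : seq (model R)) (P : model R -> R) (eta : obs_policy R).

Lemma obs_causal y1 y2 t :
  (forall s, (s < t)%N -> y1 s = y2 s) -> obs g Ms P eta y1 t = obs g Ms P eta y2 t.
Proof.
elim: t => [//|t IH] H.
by rewrite /= IH ?H // => s hs; apply: H; apply: ltnW.
Qed.

Lemma uobs_causal y1 y2 t :
  (forall s, (s <= t)%N -> y1 s = y2 s) -> uobs g Ms P eta y1 t = uobs g Ms P eta y2 t.
Proof.
move=> H; rewrite /uobs /xhat /lobs (@obs_causal y1 y2 t) ?(@obs_causal y1 y2 t.+1) ?H //.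
by move=> s hs; apply: H; apply: ltnW.
Qed.

Lemma xhat_xg y t M :
  xhat g Ms P eta y t M = xg g M (P M) (uobs g Ms P eta y) y t /\
  lobs g Ms P eta y t M = lg g M (P M) (uobs g Ms P eta y) y t.
Proof.
elim: t => [//|t [IH1 IH2]]; split.
  by rewrite /= -IH1.
by rewrite /= -IH1 -IH2.
Qed.

Lemma part2 : 0 < g -> riccati_sols g Ms P -> observer_safe g Ms P eta ->
  finite_gain g Ms P (mu_of_eta g Ms P eta).
Proof.
move=> hg hrs hs M HM x0 w v x u y [h0 hx hy hu] T.
have hu' : forall t, u t = uobs g Ms P eta y t.
  move=> t; rewrite hu /mu_of_eta; apply: uobs_causal => s hs'.
  by rewrite nth_mkseq.
have hx' : forall t, x t.+1 = ma M * x t + mb M * uobs g Ms P eta y t + w t.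
  by move=> t; rewrite -hu'.
have := dissip hg (hrs M HM) hx' hy T.+1.
have [_ <-] := xhat_xg y T.+2 M.
have := hs y T.+1 M HM.
have := hD0 (hrs M HM).
rewrite h0.
set D := rden g M (P M); set Z := (x T.+1 - _) ^+ 2.
have : 0 <= Z by exact: sqr_ge0.
move=> hZ hD hl.
have : 0 <= D * Z by rewrite mulr_ge0 // ltW.
lra.
Qed.
End Obs.

Section Reach.
Variable R : realType.
Variables (g : R) (M : model R) (p : R).
Hypothesis hg : 0 < g.
Hypothesis hr : riccati_sol g M p.

Fixpoint xtraj (u : nat -> R) x0 (w : nat -> R) t : R :=
  if t is s.+1 then ma M * xtraj u x0 w s + mb M * u s + w s else x0.

Definition J u y x0 w t :=
  \sum_(0 <= i < t) xtraj u x0 w i ^+ 2 - g ^+ 2 * \sum_(0 <= i < t) w i ^+ 2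
  - g ^+ 2 * \sum_(0 <= i < t) (y i - mc M * xtraj u x0 w i) ^+ 2 - p * x0 ^+ 2.

Lemma alg1 e :
  ma M * (ma M * e * p / rden g M p) + e * p / g ^+ 2 = e.
Proof.
rewrite -[RHS]mulr1 -(pk hg hr).
have : rden g M p != 0 by rewrite gt_eqF // (hD0 hr).
have : g != 0 by rewrite gt_eqF.
move: (ma M) (rden g M p) => a d h1 h2; field; by rewrite ?h1 ?h2.
Qed.

Lemma alg2 e :
  rden g M p * (ma M * e * p / rden g M p) ^+ 2 + g ^+ 2 * (e * p / g ^+ 2) ^+ 2
  = p * e ^+ 2.
Proof.
rewrite -[RHS]mul1r -{1}(pk hg hr).
have : rden g M p != 0 by rewrite gt_eqF // (hD0 hr).
have : g != 0 by rewrite gt_eqF.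
move: (ma M) (rden g M p) => a d h1 h2; field; by rewrite ?h1 ?h2.
Qed.

Lemma xtraj_ext u x0 w1 w2 t :
  (forall s, (s < t)%N -> w1 s = w2 s) -> xtraj u x0 w1 t = xtraj u x0 w2 t.
Proof.
elim: t => [//|t IH] H /=.
by rewrite IH ?H // => s hs; apply: H; apply: ltnW.
Qed.

Lemma xtraj_extu u1 u2 x0 w t :
  (forall s, (s < t)%N -> u1 s = u2 s) -> xtraj u1 x0 w t = xtraj u2 x0 w t.
Proof.
elim: t => [//|t IH] H /=.
by rewrite IH ?H // => s hs; apply: H; apply: ltnW.
Qed.

Lemma reach u y t e : exists x0 w,
  [/\ (forall s, (t <= s)%N -> w s = 0),
      xtraj u x0 w t - xg g M p u y t = e &
      J u y x0 w t = lg g M p u y t - p * e ^+ 2].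
Proof.
elim: t e => [|t IH] e.
  exists e, (fun _ => 0); split => //=; first by rewrite subr0.
  by rewrite /J !big_geq //; lra.
pose z := ma M * e * p / rden g M p.
pose wt := e * p / g ^+ 2.
have [x0 [w [hw he hJ]]] := IH (xs g M p u y t + z - xg g M p u y t).
exists x0, (fun s => if s == t then wt else w s); split.
- move=> s hs; case: eqP => [est|_]; first by move: hs; rewrite est ltnn.
  by apply: hw; apply: ltnW.
- have ag : xtraj u x0 (fun s => if s == t then wt else w s) t = xtraj u x0 w t.
    by apply: xtraj_ext => s hs; rewrite ltn_eqF.
  rewrite /= ag eqxx.
  have := xgS hr u y t; rewrite /= => ->.
  have -> : xtraj u x0 w t = xs g M p u y t + z by lra.
  rewrite -[RHS](alg1 e) /z /wt; ring.
- have ag : forall s, (s <= t)%N ->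
     xtraj u x0 (fun s => if s == t then wt else w s) s = xtraj u x0 w s.
    by move=> s hs; apply: xtraj_ext => s' hs'; rewrite ltn_eqF // (leq_trans hs').
  rewrite /J !big_nat_recr //= ag // eqxx.
  rewrite (@eq_big_nat _ _ _ 0 t (fun i => xtraj u x0 _ i ^+ 2) (fun i => xtraj u x0 w i ^+ 2)); last first.
    by move=> i /andP [_ hi]; rewrite ag // ltnW.
  rewrite (@eq_big_nat _ _ _ 0 t (fun i => (if i == t then wt else w i) ^+ 2) (fun i => w i ^+ 2)); last first.
    by move=> i /andP [_ hi]; rewrite ltn_eqF.
  rewrite (@eq_big_nat _ _ _ 0 t (fun i => (y i - mc M * xtraj u x0 _ i) ^+ 2)
     (fun i => (y i - mc M * xtraj u x0 w i) ^+ 2)); last first.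
    by move=> i /andP [_ hi]; rewrite ag // ltnW.
  move: hJ; rewrite /J => hJ.
  have hA := algA hr (lg g M p u y t) (xg g M p u y t) (xtraj u x0 w t) (y t).
  have hx : xtraj u x0 w t = xs g M p u y t + z by lra.
  rewrite -/(xs g M p u y t) hx in hA.
  have h2 := alg2 e.
  rewrite -/z -/wt in h2.
  have ez : xs g M p u y t + z - xs g M p u y t = z by ring.
  rewrite ez in hA.
  rewrite hx.
  move: hJ hA h2.
  set S1 := \sum_(0 <= i < t) _. set S2 := \sum_(0 <= i < t) _. set S3 := \sum_(0 <= i < t) _.
  lra.
Qed.
End Reach.

Lemma sum1 (R : realType) (f : nat -> R) t :
  \sum_(0 <= i < t.+1) f i = \sum_(0 <= i < t) f i + f t.
Proof. by rewrite big_nat_recr. Qed.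
Lemma sum2 (R : realType) (f : nat -> R) t :
  \sum_(0 <= i < t.+2) f i = \sum_(0 <= i < t) f i + f t + f t.+1.
Proof. by rewrite !big_nat_recr. Qed.
Lemma sum_eq (R : realType) (f1 f2 : nat -> R) t :
  (forall i, (i < t)%N -> f1 i = f2 i) ->
  \sum_(0 <= i < t) f1 i = \sum_(0 <= i < t) f2 i.
Proof. by move=> h; apply: eq_big_nat => i /andP [_ hi]; apply: h. Qed.

Section Mu.
Variable R : realType.
Variables (g : R) (Ms : seq (model R)) (P : model R -> R) (mu : policy R).
Hypothesis hg : 0 < g.

Definition umu (y : nat -> R) s := mu s (mkseq y s.+1).

Lemma mu_safe M : finite_gain g Ms P mu -> M \in Ms -> riccati_sol g M (P M) ->
  forall y t, lg g M (P M) (umu y) y t.+1 <= 0.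
Proof.
move=> FG HM hr y t.
have [x0 [w [hw he hJ]]] :=
  reach hg hr (umu y) y t (xs g M (P M) (umu y) y t - xg g M (P M) (umu y) y t).
pose X := xtraj M (umu y) x0 w t.+1.
pose y' := fun s => if s == t.+1 then mc M * X else y s.
have ey1 : y' t.+1 = mc M * X by rewrite /y' eqxx.
have ey2 : forall s, s != t.+1 -> y' s = y s by move=> s hs; rewrite /y' ifN.
clearbody y'.
have hu : forall s, (s < t.+1)%N -> umu y' s = umu y s.
  move=> s hs; rewrite /umu /mkseq; congr (mu s _); apply/eq_in_map => i.
  rewrite mem_iota add0n => /andP [_ hi]; rewrite ey2 //.
  by apply/eqP => eit; move: hi; rewrite eit ltnS => /(leq_trans hs); rewrite ltnn.
have hx : forall s, (s <= t.+1)%N -> xtraj M (umu y') x0 w s = xtraj M (umu y) x0 w s.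
  move=> s hs; apply: xtraj_extu => i hi; apply: hu.
  exact: leq_trans hi hs.
pose v' := fun s => y' s - mc M * xtraj M (umu y') x0 w s.
have CL : closed_loop M x0 w v' mu (xtraj M (umu y') x0 w) (umu y') y'.
  split => // s; by rewrite /v' addrC subrK.
have := FG M HM x0 w v' _ _ _ CL t.
rewrite !sum2 sum1.
have E1 : \sum_(0 <= i < t) xtraj M (umu y') x0 w i ^+ 2 =
          \sum_(0 <= i < t) xtraj M (umu y) x0 w i ^+ 2.
  by apply: sum_eq => i hi; rewrite hx // ltnW // ltnW.
have E2 : \sum_(0 <= i < t) v' i ^+ 2 =
          \sum_(0 <= i < t) (y i - mc M * xtraj M (umu y) x0 w i) ^+ 2.
  apply: sum_eq => i hi; rewrite /v' hx; last by rewrite ltnW // ltnW.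
  rewrite ey2 //.
  by apply/eqP => e; move: hi; rewrite e ltnNge leqW.
have E3 : v' t = y t - mc M * xtraj M (umu y) x0 w t.
  by rewrite /v' hx ?ey2 // neq_ltn ltnSn.
have E4 : v' t.+1 = 0.
  by rewrite /v' hx // ey1 subrr.
rewrite E1 E2 E3 E4 (hx t) // (hx t.+1) // (hw t) // -/X.
move: hJ; rewrite /J.
have hA := algA hr (lg g M (P M) (umu y) y t) (xg g M (P M) (umu y) y t)
   (xtraj M (umu y) x0 w t) (y t).
have hxt : xtraj M (umu y) x0 w t = xs g M (P M) (umu y) y t.
  by move: he; lra.
rewrite -/(xs g M (P M) (umu y) y t) hxt subrr expr0n /= mulr0 subr0 in hA.
rewrite hxt.
have hX : 0 <= X ^+ 2 by exact: sqr_ge0.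
move: hA hX.
set S1 := \sum_(0 <= i < t) _. set S2 := \sum_(0 <= i < t) _. set S3 := \sum_(0 <= i < t) _.
rewrite ?expr0n /= ?addr0 ?mulr0 ?subr0.
lra.
Qed.
End Mu.

Section Game.
Variable R : realType.
Variable Q : Type.
Variables (F : Q -> R -> R -> Q) (safe : Q -> Prop).

Fixpoint run q (sg : (nat -> R) -> nat -> R) (y : nat -> R) t : Q :=
  if t is s.+1 then F (run q sg y s) (sg y s) (y s) else q.
Definition causal (sg : (nat -> R) -> nat -> R) := forall y1 y2 t,
  (forall s, (s < t)%N -> y1 s = y2 s) -> sg y1 t = sg y2 t.
Definition Win q := exists sg, causal sg /\ forall y t, safe (run q sg y t).
Definition ycons (a : R) (f : nat -> R) : nat -> R :=
  fun s => if s is s'.+1 then f s' else a.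

Lemma win_safe q : Win q -> safe q.
Proof. by case=> sg [_ h]; apply: (h (fun _ => 0) 0%N). Qed.

Lemma win_step q : Win q -> exists u, forall y', Win (F q u y').
Proof.
case=> sg [cs h]; exists (sg (fun _ => 0) 0%N) => y'.
exists (fun y'' t => sg (ycons y' y'') t.+1); split.
  move=> y1 y2 t H; apply: cs => -[|s] hs //=; exact: H.
suff e : forall y'' t, run (F q (sg (fun _ => 0) 0%N) y') (fun y'' t => sg (ycons y' y'') t.+1) y'' t
   = run q sg (ycons y' y'') t.+1.
  by move=> y'' t; rewrite e.
move=> y''; elim=> [|t IH] /=.
  by rewrite (cs (ycons y' y'') (fun _ => 0) 0%N).
by rewrite IH.
Qed.

Definition etaW (q : Q) : R :=
  epsilon (inhabits 0) (fun u => forall y', Win (F q u y')).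

Lemma positional (r : nat -> Q) (ys : nat -> R) :
  Win (r 0%N) -> (forall t, r t.+1 = F (r t) (etaW (r t)) (ys t)) ->
  forall t, Win (r t).
Proof.
move=> h0 hs; elim=> [//|t IH]; rewrite hs.
have := win_step IH => ex.
exact: (epsilon_spec (inhabits 0) (fun u => forall y', Win (F (r t) u y')) ex).
Qed.
End Game.

Section Final.
Variable R : realType.
Variables (g : R) (Ms : seq (model R)) (P : model R -> R).

Definition fstep (M : model R) (tr : R * R * R) (u y' : R) : R * R * R :=
  let xh' := ahat g M (P M) * tr.1.1 + mb M * u + ghat g M (P M) * tr.2 in
  (xh', lstep g M (P M) xh' tr.1.2 y', y').

Definition Fm (q : seq (R * R * R)) (u y' : R) : seq (R * R * R) :=
  [seq fstep pr.1 pr.2 u y' | pr <- zip Ms q].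

Definition safeQ (q : seq (R * R * R)) : Prop := forall tr, tr \in q -> tr.1.2 <= 0.

Lemma FmQ (f : model R -> R * R * R) u y' :
  Fm [seq f M | M <- Ms] u y' = [seq fstep M (f M) u y' | M <- Ms].
Proof.
rewrite /Fm -{1}(map_id Ms) zip_map -map_comp.
by apply: eq_map.
Qed.

Definition q0 (y0 : R) : seq (R * R * R) :=
  [seq (0, lstep g M (P M) 0 0 y0, y0) | M <- Ms].

Lemma win_q0 mu : 0 < g -> riccati_sols g Ms P -> finite_gain g Ms P mu ->
  forall y0, Win Fm safeQ (q0 y0).
Proof.
move=> hg hrs FG y0.
exists (fun y t => umu mu (ycons y0 y) t); split.
  move=> y1 y2 t H; rewrite /umu /mkseq; congr (mu t _); apply/eq_in_map => i.
  rewrite mem_iota add0n => /andP [_ hi].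
  by case: i hi => [|i] hi //=; apply: H.
move=> y t.
have e : run Fm (q0 y0) (fun y t => umu mu (ycons y0 y) t) y t =
  [seq (xg g M (P M) (umu mu (ycons y0 y)) (ycons y0 y) t,
        lg g M (P M) (umu mu (ycons y0 y)) (ycons y0 y) t.+1, ycons y0 y t) | M <- Ms].
  elim: t => [//|t IH].
  rewrite /= IH FmQ; apply: eq_map => M //.
rewrite e => tr /mapP [M HM ->] /=.
exact: (mu_safe hg FG HM (hrs M HM)).
Qed.

Theorem main : 0 < g ->
  ((riccati_sols g Ms P /\ exists mu : policy R, finite_gain g Ms P mu)
   <->
   (riccati_sols g Ms P /\
    exists eta : obs_policy R, observer_safe g Ms P eta))
  /\
  (forall eta : obs_policy R,
     riccati_sols g Ms P -> observer_safe g Ms P eta ->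
     finite_gain g Ms P (mu_of_eta g Ms P eta)).
Proof.
move=> hg; split; last by move=> eta; apply: part2.
split.
  case=> hrs [mu FG]; split => //.
  pose eta := etaW Fm safeQ.
  exists eta => y t M HM.
  pose r := fun t => [seq (xhat g Ms P eta y t M, lobs g Ms P eta y t.+1 M, y t) | M <- Ms].
  have hW : forall t, Win Fm safeQ (r t).
    apply: (positional (ys := fun t => y t.+1)).
      exact: (win_q0 hg hrs FG (y 0%N)).
    move=> t'; rewrite /r FmQ; apply: eq_map => M' //.
  have h := win_safe (hW t).
  apply: (h (xhat g Ms P eta y t M, lobs g Ms P eta y t.+1 M, y t)).
  by apply/mapP; exists M.
case=> hrs [eta hs]; split => //.
exists (mu_of_eta g Ms P eta); exact: part2.
Qed.
End Final.

Theorem theorem3 (R : realType) (gamma : R) (Ms : seq (model R))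
    (P : model R -> R) :
  0 < gamma ->
  ((riccati_sols gamma Ms P /\ exists mu : policy R, finite_gain gamma Ms P mu)
   <->
   (riccati_sols gamma Ms P /\
    exists eta : obs_policy R, observer_safe gamma Ms P eta))
  /\
  (forall eta : obs_policy R,
     riccati_sols gamma Ms P -> observer_safe gamma Ms P eta ->
     finite_gain gamma Ms P (mu_of_eta gamma Ms P eta)).
Proof. exact: main. Qed.
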